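(* Let $\delta$ satisfy the Kalmanson conditions with respect to $\pi=(x_1,\dots,x_n)$, let $C_1,\dots,C_m$ ($m\ge4$) be a partition of $X$ into consecutive intervals of $\pi$ in this order, and let $\mu$ be a block weighting. Then for every $1\le i$ with $i+3\le m$, \[Q_\delta(C_i,C_{i+3})-Q_\delta(C_{i+1},C_{i+2})\ge0.\]
   Context: $X=\{1,\dots,n\}$. A dissimilarity map is $\delta:X\times X\to\mathbb{R}$ with $\delta(i,j)=\delta(j,i)\ge0$, $\delta(i,i)=0$. A circular ordering is a listing $\pi=(x_1,\dots,x_n)$ of $X$ regarded cyclically. $\delta$ satisfies the Kalmanson conditions with respect to $\pi$ if for all $1\le i<j<k<l\le n$: $\delta(x_i,x_j)+\delta(x_k,x_l)\le\delta(x_i,x_k)+\delta(x_j,x_l)$ and $\delta(x_i,x_l)+\delta(x_j,x_k)\le\delta(x_i,x_k)+\delta(x_j,x_l)$. The partition into consecutive intervals means $C_1=\{x_1,\dots,x_{a_1}\}$, $C_2=\{x_{a_1+1},\dots,x_{a_2}\},\dots,C_m=\{x_{a_{m-1}+1},\dots,x_n\}$. A block weighting is $\mu:X\to\mathbb{R}_{\ge0}$ with $\sum_{x\in C_r}\mu(x)=1$ for every $r$. Set $\delta(C_r,C_s)=\sum_{x\in C_r,y\in C_s}\mu(x)\mu(y)\delta(x,y)$ and $Q_\delta(C_r,C_s)=(m-2)\delta(C_r,C_s)-\sum_{t\ne r}\delta(C_r,C_t)-\sum_{t\ne s}\delta(C_s,C_t)$. *)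

(* Defs.v *)
(* X = 'I_n ; a circular ordering pi = (x_1,...,x_n) is a
   permutation pi of 'I_n, with x_(k+1) = pi k (0-indexed positions). *)
From HB Require Import structures.
From mathcomp Require Import all_boot all_order all_fingroup all_algebra.
Set Implicit Arguments. Unset Strict Implicit. Unset Printing Implicit Defensive.
Import Order.TTheory GRing.Theory Num.Theory.
Local Open Scope ring_scope.

Section Defs.
Variables (R : realFieldType) (n : nat).

Definition dissimilarity (d : 'I_n -> 'I_n -> R) : Prop :=
  (forall x y, d x y = d y x) /\ (forall x y, 0 <= d x y) /\ (forall x, d x x = 0).

Definition kalmanson (d : 'I_n -> 'I_n -> R) (pi : {perm 'I_n}) : Prop :=
  forall i j k l : 'I_n, (i < j)%N -> (j < k)%N -> (k < l)%N ->
    d (pi i) (pi j) + d (pi k) (pi l) <= d (pi i) (pi k) + d (pi j) (pi l) /\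
    d (pi i) (pi l) + d (pi j) (pi k) <= d (pi i) (pi k) + d (pi j) (pi l).

(* Partition into m consecutive intervals given by boundaries
   a 0 = 0 <= a 1 <= ... <= a m = n ; block r (0-indexed, r < m) consists of
   the elements pi k with a r <= k < a (r+1). *)
Definition interval_partition (m : nat) (a : nat -> nat) : Prop :=
  a 0%N = 0%N /\ a m = n /\ (forall r, (r < m)%N -> (a r <= a r.+1)%N).

Definition in_block (a : nat -> nat) (r : nat) (k : 'I_n) : bool :=
  (a r <= k)%N && (k < a r.+1)%N.

Definition block_weighting (m : nat) (a : nat -> nat) (pi : {perm 'I_n})
    (mu : 'I_n -> R) : Prop :=
  (forall x, 0 <= mu x) /\
  (forall r, (r < m)%N -> \sum_(k < n | in_block a r k) mu (pi k) = 1).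

Definition block_dist (d : 'I_n -> 'I_n -> R) (pi : {perm 'I_n}) (a : nat -> nat)
    (mu : 'I_n -> R) (r s : nat) : R :=
  \sum_(k < n | in_block a r k) \sum_(l < n | in_block a s l)
     mu (pi k) * mu (pi l) * d (pi k) (pi l).

Definition Qdelta (d : 'I_n -> 'I_n -> R) (pi : {perm 'I_n}) (m : nat)
    (a : nat -> nat) (mu : 'I_n -> R) (r s : nat) : R :=
  (m - 2)%N%:R * block_dist d pi a mu r s
  - \sum_(t < m | t != r :> nat) block_dist d pi a mu r t
  - \sum_(t < m | t != s :> nat) block_dist d pi a mu s t.

End Defs.

(* Main.v *)
Require Import Defs.
From HB Require Import structures.
From mathcomp Require Import all_boot all_order all_fingroup all_algebra.
From mathcomp Require Import zify ring lra.
Import Order.TTheory GRing.Theory Num.Theory.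
Local Open Scope ring_scope.

Theorem mainTheorem8 (R : realFieldType) (n m : nat) (d : 'I_n -> 'I_n -> R)
  (pi : {perm 'I_n}) (a : nat -> nat) (mu : 'I_n -> R) :
  dissimilarity d -> kalmanson d pi -> (4 <= m)%N ->
  interval_partition n m a -> block_weighting m a pi mu ->
  forall i : nat, (i + 3 < m)%N ->
    0 <= Qdelta d pi m a mu i (i + 3) - Qdelta d pi m a mu i.+1 i.+2.
Proof.
move=> [dsym [dge0 d0]] hK hm [a0 [am amono]] [mu0 hmu] i hi.
have e3 : (i + 3 = i.+3)%N by rewrite addn3.
rewrite e3; rewrite e3 in hi.
rewrite /Qdelta.
set D := block_dist d pi a mu.
pose E (r : nat) (f : 'I_n -> R) := \sum_(k < n | in_block a r k) mu (pi k) * f k.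
have Eext : forall r f g, (forall x, f x = g x) -> E r f = E r g.
  by move=> r f g H; apply: eq_bigr => x _; rewrite H.
have Ec : forall r c, (r < m)%N -> E r (fun _ => c) = c.
  by move=> r c hr; rewrite /E -big_distrl /= hmu // mul1r.
have Ecx : forall r f c, (r < m)%N -> (forall x, f x = c) -> E r f = c.
  by move=> r f c hr H; rewrite (Eext _ _ (fun _ => c)) // Ec.
have ED : forall r f g, E r (fun x => f x + g x) = E r f + E r g.
  by move=> r f g; rewrite /E -big_split; apply: eq_bigr => x _; rewrite mulrDr.
have EN : forall r f, E r (fun x => - f x) = - E r f.
  by move=> r f; rewrite /E -sumrN; apply: eq_bigr => x _; rewrite mulrN.
have Ege0 : forall r f, (forall x, in_block a r x -> 0 <= f x) -> 0 <= E r f.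
  by move=> r f H; apply: sumr_ge0 => x hx; rewrite mulr_ge0 // H.
have DE : forall r s, D r s = E r (fun x => E s (fun y => d (pi x) (pi y))).
  move=> r s; rewrite /D /block_dist /E /=; apply: eq_bigr => x _.
  by rewrite big_distrr; apply: eq_bigr => y _; rewrite -mulrA.
have Dsym : forall r s, D r s = D s r.
  move=> r s; rewrite /D /block_dist [RHS]exchange_big; apply: eq_bigr => k _.
  by apply: eq_bigr => l _; rewrite dsym [mu _ * mu _]mulrC.
have amon : forall r s, (r <= s <= m)%N -> (a r <= a s)%N.
  move=> r s /andP[]; elim: s => [|s IH]; first by rewrite leqn0 => /eqP ->.
  rewrite leq_eqVlt => /orP[/eqP -> //|]; rewrite ltnS => hrs hs.
  apply: leq_trans (IH hrs (ltnW hs)) (amono _ hs).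
have hord : forall r s (x y : 'I_n), (r < s)%N -> (s < m)%N ->
    in_block a r x -> in_block a s y -> (x < y)%N.
  move=> r s x y hrs hsm /andP[_ hx] /andP[hy _].
  apply: leq_trans hx (leq_trans (amon r.+1 s _) hy).
  by rewrite hrs /= ltnW.
pose E5 (t : nat) (F : 'I_n -> 'I_n -> 'I_n -> 'I_n -> 'I_n -> R) :=
  E i (fun x => E i.+1 (fun y => E i.+2 (fun z => E i.+3 (fun w => E t (fun u => F x y z w u))))).
have E5D : forall t F G, E5 t (fun x y z w u => F x y z w u + G x y z w u) = E5 t F + E5 t G.
  move=> t F G; rewrite /E5 -ED; apply: (Eext) => x /=; rewrite -ED; apply: (Eext) => y /=.
  rewrite -ED; apply: (Eext) => z /=; rewrite -ED; apply: (Eext) => w /=; exact: ED.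
have E5N : forall t F, E5 t (fun x y z w u => - F x y z w u) = - E5 t F.
  move=> t F; rewrite /E5 -EN; apply: (Eext) => x /=; rewrite -EN; apply: (Eext) => y /=.
  rewrite -EN; apply: (Eext) => z /=; rewrite -EN; apply: (Eext) => w /=; exact: EN.
have hi0 : (i < m)%N by lia.
have hi1 : (i.+1 < m)%N by lia.
have hi2 : (i.+2 < m)%N by lia.
have key : forall t, (t < m)%N -> (t < i)%N || (i.+3 < t)%N ->
   0 <= D i i.+3 - D i.+1 i.+2 + D i.+1 t + D i.+2 t - D i t - D i.+3 t.
  move=> t ht hti.
  have -> : D i i.+3 - D i.+1 i.+2 + D i.+1 t + D i.+2 t - D i t - D i.+3 t =
     E5 t (fun x y z w u => d (pi x) (pi w) + - d (pi y) (pi z) + d (pi y) (pi u)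
          + d (pi z) (pi u) + - d (pi x) (pi u) + - d (pi w) (pi u)).
    rewrite !E5D !E5N.
    congr (_ - _ + _ + _ - _ - _); rewrite DE /E5; symmetry.
    - apply: (Eext) => x /=; apply: (Ecx) => // y; apply: (Ecx) => // z.
      by apply: (Eext) => w; rewrite Ec.
    - apply: (Ecx) => // x; apply: (Eext) => y; apply: (Eext) => z.
      by apply: (Ecx) => // w; rewrite Ec.
    - apply: (Ecx) => // x; apply: (Eext) => y; apply: (Ecx) => // z.
      by apply: (Ecx) => // w; apply: (Eext).
    - apply: (Ecx) => // x; apply: (Ecx) => // y; apply: (Eext) => z.
      by apply: (Ecx) => // w; apply: (Eext).
    - apply: (Eext) => x; apply: (Ecx) => // y; apply: (Ecx) => // z.
      by apply: (Ecx) => // w; apply: (Eext).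
    - apply: (Ecx) => // x; apply: (Ecx) => // y; by apply: (Ecx).
  rewrite /E5; apply: (Ege0) => x hx; apply: (Ege0) => y hy; apply: (Ege0) => z hz.
  apply: (Ege0) => w hw; apply: (Ege0) => u hu.
  have xy : (x < y)%N by apply: ((hord) i i.+1).
  have yz : (y < z)%N by apply: ((hord) i.+1 i.+2).
  have zw : (z < w)%N by apply: ((hord) i.+2 i.+3).
  case/orP: hti => hti.
  - have ux : (u < x)%N by apply: ((hord) t i).
    have [K1 _] := hK u x y w ux xy (ltn_trans yz zw).
    have [_ K2] := hK u y z w (ltn_trans ux xy) yz zw.
    move: K1 K2; rewrite (dsym (pi y) (pi u)) (dsym (pi z) (pi u)) (dsym (pi x) (pi u)) (dsym (pi w) (pi u)).
    lra.
  - have wu : (w < u)%N by apply: ((hord) i.+3 t).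
    have [_ K1] := hK x y w u xy (ltn_trans yz zw) wu.
    have [K2 _] := hK y z w u yz zw wu.
    move: K1 K2; lra.
have Sdef : forall r, (r < m)%N ->
    \sum_(t < m | t != r :> nat) D r t = \sum_(0 <= t < m) D r t - D r r.
  move=> r hr; rewrite big_mkord [in RHS](bigD1 (Ordinal hr)) //= addrAC subrr add0r.
  by apply: eq_bigl => t.
have split : forall f : nat -> R, \sum_(0 <= t < m) f t =
    \sum_(0 <= t < i) f t + (f i + f i.+1 + f i.+2 + f i.+3) + \sum_(i.+4 <= t < m) f t.
  have h1 : (i <= m)%N by lia.
  have h2 : (i.+4 <= m)%N by lia.
  move=> f.
  have l0 : (i < i.+4)%N by lia.
  have l1 : (i.+1 < i.+4)%N by lia.
  have l2 : (i.+2 < i.+4)%N by lia.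
  have l3 : (i.+3 < i.+4)%N by lia.
  have s4 : \sum_(i <= t < i.+4) f t = f i + f i.+1 + f i.+2 + f i.+3.
    by rewrite big_ltn // big_ltn // big_ltn // big_ltn // big_geq // addr0 !addrA.
  have l4 : (i <= i.+4)%N by lia.
  rewrite (@big_cat_nat _ _ _ i 0 m) // (@big_cat_nat _ _ _ i.+4 i m) //.
  by rewrite s4 -[RHS]addrA.
have -> : (m - 2)%:R * D i i.+3 - \sum_(t < m | t != i :> nat) D i t -
   \sum_(t < m | t != i.+3 :> nat) D i.+3 t -
   ((m - 2)%:R * D i.+1 i.+2 - \sum_(t < m | t != i.+1 :> nat) D i.+1 t -
   \sum_(t < m | t != i.+2 :> nat) D i.+2 t) =
   \sum_(0 <= t < i) (D i i.+3 - D i.+1 i.+2 + D i.+1 t + D i.+2 t - D i t - D i.+3 t)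
   + \sum_(i.+4 <= t < m) (D i i.+3 - D i.+1 i.+2 + D i.+1 t + D i.+2 t - D i t - D i.+3 t).
  rewrite !Sdef // !split.
  have cst : forall (p q : nat) (x : R), \sum_(p <= t < q) x = x * (q - p)%:R.
    by move=> p q x; rewrite sumr_const_nat mulr_natr.
  have bs : forall (p q : nat) (f g : nat -> R), \sum_(p <= t < q) (f t + g t) = \sum_(p <= t < q) f t + \sum_(p <= t < q) g t.
    by move=> p q f g; rewrite big_split.
  rewrite !bs !sumrN !cst.
  have hm2 : (m - 2)%:R = (i - 0)%:R + (m - i.+4)%:R + 2%:R :> R.
    by rewrite -!natrD; congr (_%:R); lia.
  rewrite hm2 (Dsym i.+1 i) (Dsym i.+2 i) (Dsym i.+3 i) (Dsym i.+2 i.+1)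
    (Dsym i.+3 i.+1) (Dsym i.+3 i.+2).
  ring.
apply: addr_ge0; rewrite big_nat_cond; apply: sumr_ge0 => t /andP[/andP[h1 h2] _];
  apply: key; lia.
Qed.
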